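(* Assume (H1) and (H2). Fix $\varepsilon>0$, let $\alpha=2/5$ and let $\delta,\gamma,\rho>0$ be such that $\mathbb{P}_n(\Omega_n^{\alpha,\delta,\gamma,\rho})\ge1-\varepsilon$ for all $n$ large enough; write $\Omega_\varepsilon=\Omega_n^{\alpha,\delta,\gamma,\rho}$. For any $\alpha'>0$ and $a>0$ there exist $\beta>0$, $c>0$ such that for any $s,t\in[0,1]$ with $|s-t|\le(\log n)^{-3}$, for $n$ large enough, $$\mathbb{E}_n\big(\|\mathbf{G}^{(n)}_s-\mathbf{G}^{(n)}_t\|_1^\beta\mathbb{1}_{\Omega_\varepsilon}\big)\le c|t-s|^{1+a}.$$
   Context: Planar trees: finite subsets $T$ of the set of finite words over $\{1,2,\dots\}$ containing the empty word $\emptyset$, with $ui\in T\Rightarrow u\in T$ and $uj\in T$ for $1\le j\le i$; $c_u(T)$ number of children, $|u|$ word length, $d$ graph distance; vertices ordered lexicographically (prefixes first), $u(k)$ the $k$-th vertex, $u(0)=\emptyset$; $\mathcal{T}_n$: trees with $n+1$ vertices. (H1): $\mu=(\mu_k)_{k\ge0}$ probability on $\mathbb{N}$ with $\mu_0+\mu_1\ne1$, $\sum_kk\mu_k=1$, $\sum_{k\le K}\mu_k=1$ for some integer $K>0$. $\mathbf{T}$: GW tree with offspring law $\mu$; $\mathbb{P}_n=\mathbb{P}(\cdot\mid|\mathbf{T}|=n+1)$, $\mathbb{E}_n$ its expectation. (H2): for $k\ge1$, $\nu_k$ probability on $\mathbb{R}^k$, $(Y_{k,1},\dots,Y_{k,k})\sim\nu_k$,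 $m_{k,j}=\mathbb{E}Y_{k,j}$; require $\sum_k\sum_{j\le k}\mu_km_{k,j}=0$, $\sum_k\sum_{j\le k}\mu_k\mathbb{E}(Y^2_{k,j})\in(0,\infty)$, and some $p>4$ with $\mathbb{E}|Y_{k,j}-m_{k,j}|^p<\infty$ for all $1\le j\le k\le K$. $I_K=\{(k,j):1\le j\le k\le K\}$; $\|X\|_1=\sum_{I_K}|X_{k,j}|$. $A_{u,k,j}$: number of strict ancestors $v$ of $u$ with $c_v=k$ and $u$ descending from (or equal to) $vj$; $A_{u,l,k,j}$: number of those with moreover $d(u,v)\le l$. $\mathbf{G}^{(n)}_{k,j}(s)=n^{-1/4}[\mathbf{g}(\lfloor ns\rfloor)+\{ns\}(\mathbf{g}(\lfloor ns\rfloor+1)-\mathbf{g}(\lfloor ns\rfloor))]$ with $\mathbf{g}(l)=A_{u(l),k,j}-\mu_k|u(l)|$. $\mathbf{h}_n(s)=H_{ns}/\sqrt n$ with $H$ the interpolation of $k\mapsto|u(k)|$. $\Omega_n^{\alpha,\delta,\gamma,\rho}$: set of $T\in\mathcal{T}_n$ with $|\mathbf{h}_n(s)-\mathbf{h}_n(t)|\le\delta|t-s|^\alpha$ for all $s,t\in[0,1]$, $\max_l||u(l+1)|-|u(l)||\le\rho\log n$, $|u(n)|<\rho\log n$, and $|A_{u,l,k,j}-\mu_kl|\le\gamma\sqrt{l\log n}$ for all $(k,j)\in I_K$, $u\in T$, $l\in(0,|u|]$. *)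

(* Defs.v *)
From HB Require Import structures.
From mathcomp Require Import all_boot all_order all_algebra.
From mathcomp Require Import all_classical all_reals all_analysis.
Set Implicit Arguments. Unset Strict Implicit. Unset Printing Implicit Defensive.
Import Order.TTheory GRing.Theory Num.Theory.
Import numFieldNormedType.Exports.
Local Open Scope classical_set_scope.
Local Open Scope ring_scope.

(** Words over {1,2,...}: lists of naturals (letters are required to be >= 1). *)
Definition word := seq nat.

Fixpoint lexlt (u v : word) : bool :=
  match u, v with
  | [::], [::] => false
  | [::], _ :: _ => true
  | _ :: _, [::] => false
  | a :: u', b :: v' => (a < b)%N || ((a == b) && lexlt u' v')
  end.

(** A planar tree is represented by the list of its vertices in
    lexicographic order, so that [nth [::] T k] is the vertex u(k). *)
Definition is_planar_tree (T : seq word) : Prop :=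
  [::] \in T /\ sorted lexlt T /\
  (forall u, u \in T -> all (fun x => (0 < x)%N) u) /\
  (forall u i, rcons u i \in T ->
     u \in T /\ forall j, (0 < j <= i)%N -> rcons u j \in T).

Definition Trees_n (n : nat) : set (seq word) :=
  [set T | is_planar_tree T /\ size T = n.+1].

Definition children (T : seq word) (u : word) : nat :=
  count (fun v => (size v == (size u).+1) && (take (size u) v == u)) T.

Definition vertex (T : seq word) (k : nat) : word := nth [::] T k.

(** A_{u,k,j}: strict ancestors v = take i u (i < |u|) with c_v = k and
    u descending from (or equal to) v j, i.e. the (i+1)-th letter of u is j. *)
Definition A_ukj (T : seq word) (u : word) (k j : nat) : nat :=
  count (fun i => (children T (take i u) == k) && (nth 0%N u i == j))
        (iota 0 (size u)).

(** A_{u,l,k,j}: moreover d(u,v) = |u| - |v| <= l. *)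
Definition A_ulkj (T : seq word) (u : word) (l k j : nat) : nat :=
  count (fun i => [&& (size u - i <= l)%N, children T (take i u) == k
                    & nth 0%N u i == j])
        (iota 0 (size u)).

Section Defs.
Variable R : realType.

Definition gw_weight (mu : nat -> R) (T : seq word) : R :=
  \prod_(u <- T) mu (children T u).

(** P(|T| = n+1) *)
Definition Zn (mu : nat -> R) (n : nat) : R :=
  \sum_(T \in Trees_n n) gw_weight mu T.

(** E_n = E( . | |T| = n+1) *)
Definition En (mu : nat -> R) (n : nat) (f : seq word -> R) : R :=
  (\sum_(T \in Trees_n n) gw_weight mu T * f T) / Zn mu n.

Definition Pn (mu : nat -> R) (n : nat) (A : set (seq word)) : R :=
  En mu n (\1_A).

Definition interp (f : nat -> R) (x : R) : R :=
  let m := Num.truncn x in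
  f m + (x - m%:R) * (f m.+1 - f m).

Definition hn (T : seq word) (n : nat) (s : R) : R :=
  interp (fun l => (size (vertex T l))%:R) (n%:R * s) / Num.sqrt n%:R.

Definition Gn (mu : nat -> R) (T : seq word) (n k j : nat) (s : R) : R :=
  n%:R `^ (- (1 / 4)) *
  interp (fun l => (A_ukj T (vertex T l) k j)%:R - mu k * (size (vertex T l))%:R)
         (n%:R * s).

Definition G_dist1 (mu : nat -> R) (K : nat) (T : seq word) (n : nat) (s t : R) : R :=
  \sum_(1 <= k < K.+1) \sum_(1 <= j < k.+1) `|Gn mu T n k j s - Gn mu T n k j t|.

Definition Omega (mu : nat -> R) (K n : nat) (alpha delta gamma rho : R) :
    set (seq word) :=
  [set T | Trees_n n T /\
    (forall s t : R, 0 <= s <= 1 -> 0 <= t <= 1 ->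
       `|hn T n s - hn T n t| <= delta * `|t - s| `^ alpha) /\
    (forall l : nat, (l < n)%N ->
       `|(size (vertex T l.+1))%:R - (size (vertex T l))%:R| <= rho * ln n%:R) /\
    ((size (vertex T n))%:R < rho * ln n%:R) /\
    (forall (k j : nat) (u : word) (l : nat), (1 <= j <= k)%N -> (k <= K)%N ->
       u \in T -> (0 < l <= size u)%N ->
       `|(A_ulkj T u l k j)%:R - mu k * l%:R| <= gamma * Num.sqrt (l%:R * ln n%:R))].

End Defs.

(* Main.v *)
Require Import Defs.
From HB Require Import structures.
From mathcomp Require Import all_boot all_order all_algebra.
From mathcomp Require Import all_classical all_reals all_analysis.
From mathcomp Require Import zify ring lra.
Import Order.TTheory GRing.Theory Num.Theory.
Import numFieldNormedType.Exports.
Local Open Scope classical_set_scope.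
Local Open Scope ring_scope.

Lemma lexlt_irr (u : word) : ~~ lexlt u u.
Proof. by elim: u => [|a u IH] //=; rewrite ltnn eqxx /=. Qed.

Lemma lexlt_trans : transitive lexlt.
Proof.
move=> v u w; elim: u v w => [|a u IH] [|b v] [|c w] //=.
move=> /orP[ab | /andP[/eqP <- uv]] /orP[bc | /andP[/eqP <- vw]].
- by rewrite (ltn_trans ab bc).
- by rewrite ab.
- by rewrite bc.
- by rewrite eqxx (IH _ _ uv vw) orbT.
Qed.

Lemma take_lexle (m : nat) (v : word) : take m v = v \/ lexlt (take m v) v.
Proof.
elim: v m => [|b v IH] [|m] /=; try by left.
  by right.
case: (IH m) => [->|h]; first by left.
by right; rewrite eqxx h orbT.
Qed.

Lemma lexlt_key (u v : word) : lexlt u v ->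
  take (size u) v = u \/
  exists p, [/\ (p < size u)%N, (p < size v)%N, take p u = take p v &
                lexlt u (take p.+1 v)].
Proof.
elim: u v => [|a u IH] [|b v] //=; first by move=> _; left.
move=> /orP[ab | /andP[/eqP eab uv]].
  by right; exists 0%N; split => //=; rewrite ab.
subst b; case: (IH _ uv) => [->|[p [h1 h2 h3 h4]]]; first by left.
by right; exists p.+1; split => //=; rewrite ?h3 // eqxx h4 orbT.
Qed.

Lemma prefix_closed (T : seq word) (v : word) (m : nat) :
  is_planar_tree T -> v \in T -> take m v \in T.
Proof.
move=> [_ [_ [_ HT]]] vT.
have [hm|hm] := leqP (size v) m; first by rewrite take_oversize.
suff H : forall k, take (size v - k) v \in T.
  by have := H (size v - m)%N; rewrite subKn // ltnW.
elim=> [|k IH]; first by rewrite subn0 take_size.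
case E: (size v - k)%N IH => [|q] IH.
  by have -> : (size v - k.+1 = 0)%N by lia.
have -> : (size v - k.+1 = q)%N by lia.
rewrite (take_nth 0%N) in IH; last by lia.
by have [] := HT _ _ IH.
Qed.

Lemma lca_exists (T : seq word) (n i j : nat) :
  is_planar_tree T -> size T = n.+1 -> (i <= j)%N -> (j <= n)%N ->
  exists p c, [/\ (p <= size (vertex T i))%N, (p <= size (vertex T j))%N,
     take p (vertex T i) = take p (vertex T j),
     (i <= c <= j)%N & (size (vertex T c) <= p.+1)%N].
Proof.
move=> HT Hs ij jn.
have [eij|ltij] := eqVneq i j.
  by subst j; exists (size (vertex T i)), i; split => //; rewrite leqnn.
have {}ltij : (i < j)%N by rewrite ltn_neqAle ltij.
have Hsort : sorted lexlt T by case: HT => _ [].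
have uv : lexlt (vertex T i) (vertex T j).
  by apply: (sorted_ltn_nth lexlt_trans) => //; rewrite inE Hs; lia.
case: (lexlt_key _ _ uv) => [hpre | [p [h1 h2 h3 h4]]].
  exists (size (vertex T i)), i; split.
  - exact: leqnn.
  - have := congr1 size hpre; rewrite size_take; case: ifP => h0 h; lia.
  - by rewrite take_size hpre.
  - by rewrite leqnn ltnW.
  - exact: leqnSn.
set x := take p.+1 (vertex T j) in h4.
have xT : x \in T.
  apply: prefix_closed => //; apply: mem_nth; rewrite Hs; lia.
exists p, (index x T); split => //; try lia.
- apply/andP; split.
  + rewrite leqNgt; apply/negP => ci.
    have := sorted_ltn_nth lexlt_trans [::] Hsort.
    move=> /(_ (index x T) i); rewrite !inE index_mem xT Hs => /(_ isT).
    have -> : (i < n.+1)%N by lia.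
    move=> /(_ isT ci); rewrite /vertex nth_index // => hxu.
    by have := lexlt_irr (vertex T i); rewrite (lexlt_trans _ _ _ h4 hxu).
  + rewrite leqNgt; apply/negP => jc.
    have := sorted_ltn_nth lexlt_trans [::] Hsort.
    move=> /(_ j (index x T)); rewrite !inE index_mem xT Hs => /(_ _ isT).
    have -> : (j < n.+1)%N by lia.
    move=> /(_ isT jc); rewrite nth_index // => hvx.
    case: (take_lexle p.+1 (vertex T j)) => hx.
      by have := lexlt_irr (vertex T j); rewrite -{2}hx hvx.
    by have := lexlt_irr (vertex T j); rewrite (lexlt_trans _ _ _ hvx hx).
- by rewrite /vertex nth_index // size_takel.
Qed.

Section P2sec.
Local Open Scope nat_scope.
Lemma A_dec (T : seq word) (u : word) (p k j : nat) : (p <= size u)%N ->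
  A_ukj T u k j =
  (count (fun i => (children T (take i (take p u)) == k) &&
                   (nth 0%N (take p u) i == j)) (iota 0 p) +
   A_ulkj T u (size u - p) k j)%N.
Proof.
move=> hp; rewrite /A_ukj /A_ulkj.
have E : iota 0 (size u) = iota 0 p ++ iota p (size u - p).
  by rewrite -iotaD subnKC.
rewrite !E !count_cat addnA; congr addn.
have -> : count (fun i : nat =>
     [&& size u - i <= size u - p, children T (take i u) == k
       & nth 0 u i == j]) (iota 0 p) = 0%N.
  apply/eqP; rewrite -leqn0 leqNgt -has_count; apply/hasPn => i.
  rewrite mem_iota add0n => /andP[_ hi] /=.
  have -> : (size u - i <= size u - p)%N = false by apply/negbTE; rewrite -ltnNge; apply: ltn_sub2l => //; apply: (leq_trans hi).
  by [].
rewrite addn0; apply: eq_in_count => i; rewrite mem_iota add0n => /andP[_ hi].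
by rewrite take_takel ?nth_take // ltnW.
apply: eq_in_count => i; rewrite mem_iota => /andP[hi _] /=.
by rewrite leq_sub2l.
Qed.

Lemma A_ulkj0 (T : seq word) (u : word) (k j : nat) : A_ulkj T u 0 k j = 0%N.
Proof.
rewrite /A_ulkj; apply/eqP; rewrite -leqn0 leqNgt -has_count; apply/hasPn => i.
rewrite mem_iota add0n => /andP[_ hi] /=.
by rewrite leqn0 subn_eq0 leqNgt hi.
Qed.

End P2sec.


Lemma gsingle (R : realType) (mu : nat -> R) T k j (gam L : R) (hg : 0 <= gam)
  (hL : 0 <= L) u l :
  (forall w l, w \in T -> (0 < l <= size w)%N ->
     `|(A_ulkj T w l k j)%:R - mu k * l%:R| <= gam * Num.sqrt (l%:R * L)) ->
  u \in T -> (l <= size u)%N ->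
  `|(A_ulkj T u l k j)%:R - mu k * l%:R| <= gam * Num.sqrt (l%:R * L).
Proof.
move=> H5 uT hl; case: l hl => [|l] hl.
  by rewrite A_ulkj0 !mulr0 subr0 normr0 mulr_ge0 // sqrtr_ge0.
exact: H5.
Qed.

Lemma gpair (R : realType) (mu : nat -> R) T k j (gam L : R) (hg : 0 <= gam)
  (hL : 0 <= L) u v p :
  (forall w l, w \in T -> (0 < l <= size w)%N ->
     `|(A_ulkj T w l k j)%:R - mu k * l%:R| <= gam * Num.sqrt (l%:R * L)) ->
  u \in T -> v \in T -> (p <= size u)%N -> (p <= size v)%N ->
  take p u = take p v ->
  `|((A_ukj T u k j)%:R - mu k * (size u)%:R) -
    ((A_ukj T v k j)%:R - mu k * (size v)%:R)| <=
  gam * Num.sqrt ((size u - p)%:R * L) + gam * Num.sqrt ((size v - p)%:R * L).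
Proof.
move=> H5 uT vT pu pv tuv.
rewrite (A_dec T u p k j pu) (A_dec T v p k j pv) tuv.
set c := count _ _.
have eu : (size u)%:R = p%:R + (size u - p)%:R :> R by rewrite -natrD subnKC.
have ev : (size v)%:R = p%:R + (size v - p)%:R :> R by rewrite -natrD subnKC.
rewrite eu ev !natrD.
set a := (A_ulkj T u _ k j)%:R; set b := (A_ulkj T v _ k j)%:R.
set lu := (size u - p)%:R; set lv := (size v - p)%:R.
have -> : c%:R + a - mu k * (p%:R + lu) - (c%:R + b - mu k * (p%:R + lv)) =
   (a - mu k * lu) - (b - mu k * lv) by ring.
apply: le_trans (ler_normB _ _) _.
apply: lerD; apply: gsingle => //; exact: leq_subr.
Qed.

Definition Hf (R : realType) (T : seq word) (l : nat) : R := (size (vertex T l))%:R.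
Definition gf (R : realType) (mu : nat -> R) (T : seq word) (k j l : nat) : R :=
  (A_ukj T (vertex T l) k j)%:R - mu k * Hf R T l.
Arguments gf {R}.

Lemma gtwo (R : realType) (mu : nat -> R) T n k j (gam L : R) (hg : 0 <= gam)
  (hL : 0 <= L) i i' :
  is_planar_tree T -> size T = n.+1 ->
  (forall w l, w \in T -> (0 < l <= size w)%N ->
     `|(A_ulkj T w l k j)%:R - mu k * l%:R| <= gam * Num.sqrt (l%:R * L)) ->
  (i <= i')%N -> (i' <= n)%N ->
  exists c, (i <= c <= i')%N /\
   `|gf mu T k j i - gf mu T k j i'| <=
   gam * Num.sqrt ((Hf R T i - Hf R T c + 1) * L) +
   gam * Num.sqrt ((Hf R T i' - Hf R T c + 1) * L).
Proof.
move=> HT Hs H5 ii' i'n.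
have [p [c [h1 h2 h3 h4 h5]]] := lca_exists T n i i' HT Hs ii' i'n.
exists c; split => //.
have mT : forall l, (l <= n)%N -> vertex T l \in T.
  by move=> l ln; apply: mem_nth; rewrite Hs.
have m1 : vertex T i \in T by apply: mT; lia.
have m2 : vertex T i' \in T by apply: mT; lia.
apply: le_trans (@gpair R mu T k j gam L hg hL (vertex T i) (vertex T i') p H5 m1 m2 h1 h2 h3) _.
have hc : (Hf R T c <= p%:R + 1) by rewrite /Hf natr1 ler_nat.
apply: lerD; apply: ler_wpM2l => //; rewrite ler_sqrt ?mulr_ge0 //.
- apply: ler_wpM2r => //; rewrite natrB // /Hf; lra.
- rewrite /Hf; have := ler_nat R p (size (vertex T i)); rewrite h1; lra.
- apply: ler_wpM2r => //; rewrite natrB // /Hf; lra.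
- rewrite /Hf; have := ler_nat R p (size (vertex T i')); rewrite h2; lra.
Qed.


Lemma interp_clamp (R : realType) (f : nat -> R) (n : nat) (x : R) :
  0 <= x <= n%:R -> interp f x = interp (fun l => f (minn l n)) x.
Proof.
move=> /andP[x0 xn]; rewrite /interp.
have [h1 h2] := andP (truncn_itv x0).
set m := Num.truncn x in h1 h2 *.
have mn : (m <= n)%N by rewrite -(ler_nat R); lra.
have [mn'|mn'] := ltnP m n.
  by rewrite (minn_idPl mn').
have em : m = n by apply/eqP; rewrite eqn_leq mn mn'.
have ex : x = m%:R by rewrite em in h1 *; lra.
by rewrite ex subrr !mul0r !addr0 em.
Qed.

Lemma interp_lipA (R : realType) (f : nat -> R) (L1 x y : R) :
  (forall m, `|f m.+1 - f m| <= L1) -> 0 <= x -> x <= y ->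
  (Num.truncn y <= (Num.truncn x).+1)%N ->
  `|interp f y - interp f x| <= (y - x) * L1.
Proof.
move=> HL x0 xy ht; rewrite /interp.
have y0 : 0 <= y by lra.
have [hx1 hx2] := andP (truncn_itv x0).
have [hy1 hy2] := andP (truncn_itv y0).
set m := Num.truncn x in hx1 hx2 ht *.
set m' := Num.truncn y in hy1 hy2 ht *.
have mm' : (m <= m')%N by apply: le_truncn.
have [e|e] : m' = m \/ m' = m.+1 by lia.
  rewrite e.
  have -> : f m + (y - m%:R) * (f m.+1 - f m) - (f m + (x - m%:R) * (f m.+1 - f m))
     = (y - x) * (f m.+1 - f m) by ring.
  by rewrite normrM ger0_norm ?subr_ge0 // ler_wpM2l ?subr_ge0.
rewrite e in hy1 hy2 *.
have -> : f m.+1 + (y - m.+1%:R) * (f m.+2 - f m.+1) -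
  (f m + (x - m%:R) * (f m.+1 - f m)) =
  (y - m.+1%:R) * (f m.+2 - f m.+1) + (m.+1%:R - x) * (f m.+1 - f m).
  rewrite -natr1; ring.
apply: le_trans (ler_normD _ _) _.
have g1 : 0 <= y - m.+1%:R by lra.
have g2 : 0 <= m.+1%:R - x by lra.
rewrite !normrM (ger0_norm g1) (ger0_norm g2).
have -> : (y - x) * L1 = (y - m.+1%:R) * L1 + (m.+1%:R - x) * L1 by ring.
by apply: lerD; apply: ler_wpM2l.
Qed.

Lemma interp_lipB (R : realType) (f : nat -> R) (L1 x y : R) :
  (forall m, `|f m.+1 - f m| <= L1) -> 0 <= x -> x <= y ->
  ((Num.truncn x).+1 < Num.truncn y)%N ->
  `|interp f y - interp f x| <=
     2 * L1 + `|f (Num.truncn x).+1 - f (Num.truncn y)|.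
Proof.
move=> HL x0 xy ht; rewrite /interp.
have y0 : 0 <= y by lra.
have [hx1 hx2] := andP (truncn_itv x0).
have [hy1 hy2] := andP (truncn_itv y0).
set m := Num.truncn x in hx1 hx2 ht *.
set m' := Num.truncn y in hy1 hy2 ht *.
have -> : f m' + (y - m'%:R) * (f m'.+1 - f m') - (f m + (x - m%:R) * (f m.+1 - f m))
  = (y - m'%:R) * (f m'.+1 - f m') + (m.+1%:R - x) * (f m.+1 - f m)
    - (f m.+1 - f m') by rewrite -natr1; ring.
have hL0 : 0 <= L1 by apply: le_trans (HL 0%N); exact: normr_ge0.
have A1 : `|(y - m'%:R) * (f m'.+1 - f m')| <= L1.
  rewrite normrM ger0_norm ?subr_ge0 //.
  apply: le_trans (_ : 1 * L1 <= _); last by rewrite mul1r.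
  by apply: ler_pM => //; [rewrite subr_ge0 | rewrite -natr1 in hy2; lra].
have A2 : `|(m.+1%:R - x) * (f m.+1 - f m)| <= L1.
  have g2 : 0 <= m.+1%:R - x by lra.
  rewrite normrM ger0_norm //.
  apply: le_trans (_ : 1 * L1 <= _); last by rewrite mul1r.
  by apply: ler_pM => //; rewrite -natr1 in hx2 *; lra.
have B1 := ler_normB ((y - m'%:R) * (f m'.+1 - f m') + (m.+1%:R - x) * (f m.+1 - f m)) (f m.+1 - f m').
have B2 := ler_normD ((y - m'%:R) * (f m'.+1 - f m')) ((m.+1%:R - x) * (f m.+1 - f m)).
lra.
Qed.


Section Num.
Variable R : realType.
Implicit Types x d N : R.

Lemma expR1_le4 : expR 1 <= 4 :> R.
Proof.
have h := expR_ge1Dx (- (1/2) : R).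
have h2 : expR (1/2) <= 2 :> R.
  have hp := expR_gt0 (1/2 : R).
  rewrite expRN in h.
  have : 1 / 2 <= (expR (1/2))^-1 :> R by lra.
  rewrite ler_pdivrMr // => /(ler_wpM2r (ltW hp)).
  rewrite mulrAC mulVf ?gt_eqF // mul1r; lra.
have -> : (1 : R) = 1/2 + 1/2 by lra.
rewrite expRD; have hp := expR_gt0 (1/2 : R).
have : expR (1/2) * expR (1/2) <= 2 * 2 :> R by apply: ler_pM => //; exact: ltW.
lra.
Qed.

Lemma ln_ge1 x : 4 <= x -> 1 <= ln x.
Proof.
move=> h; rewrite -[X in X <= _](expRK 1) ler_ln ?posrE ?expR_gt0 //; last lra.
exact: le_trans expR1_le4 h.
Qed.

Lemma ln_le8 x : 0 < x -> ln x <= 8 * x `^ (1/8).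
Proof.
move=> x0; have p0 := powR_gt0 (1/8) x0.
have := ln_sublinear p0; rewrite ln_powR => h; lra.
Qed.

Lemma powR_mono_exp d r s : 0 < d <= 1 -> r <= s -> d `^ s <= d `^ r.
Proof. by move=> hd rs; apply: ger_powR. Qed.

Lemma powR_neg_le N d r : 0 < N -> 0 <= r -> 1 <= N * d ->
  N `^ (- r) <= d `^ r.
Proof.
move=> N0 r0 hNd.
have d0 : 0 <= d.
  rewrite leNgt; apply/negP => dn; have : N * d < 0 by rewrite pmulr_rlt0.
  lra.
have h1 : 1 <= N `^ r * d `^ r.
  rewrite -powRM //; last exact: ltW.
  have := @ge0_ler_powR R r r0 1 (N * d).
  rewrite powR1 !nnegrE; apply => //; exact: le_trans hNd.
apply: le_trans (_ : N `^ (- r) * (N `^ r * d `^ r) <= _).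
  by rewrite -{1}(mulr1 (N `^ _)) ler_wpM2l // powR_ge0.
have e : N `^ (- r) * N `^ r = 1.
  by rewrite -powRD ?addNr ?powRr0 //; apply/implyP => _; rewrite gt_eqF.
by rewrite mulrA e mul1r.
Qed.

End Num.


Section Num2.
Variable R : realType.
Implicit Types x d N : R.

Lemma powRD' x r s : 0 < x -> x `^ (r + s) = x `^ r * x `^ s.
Proof. by move=> x0; rewrite powRD //; apply/implyP => _; rewrite gt_eqF. Qed.

Lemma N2 N d : 4 <= N -> 0 <= d <= 1 -> N * d <= 2 ->
  N `^ (- (1/4)) * (N * d * ln N) <= 16 * d `^ (1/30).
Proof.
move=> N4 /andP[d0 d1] Nd2.
have N0 : 0 < N by lra.
have [->|dp] := eqVneq d 0.
  by rewrite mulr0 mul0r mulr0 powR0 ?mulr0 //; lra.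
have dpos : 0 < d by rewrite lt0r dp.
have hL := @ln_le8 _ N N0.
have L0 : 0 <= ln N by apply: ln_ge0; lra.
have q0 : 0 <= N `^ (- (1/4)) := powR_ge0 _ _.
have E1 : N `^ (- (1/4)) * N `^ (1/8) * N = N `^ (7/8).
  rewrite -[N `^ (- (1/4)) * N `^ (1/8)](@powRD' N) //.
  rewrite -[X in _ * X = _](powRr1 (ltW N0)) -(@powRD' N) //; congr (_ `^ _); lra.
have E2 : N `^ (7/8) * d = (N * d) `^ (7/8) * d `^ (1/8).
  rewrite (powRM _ (ltW N0) (ltW dpos)) -mulrA -[d `^ (7/8) * d `^ (1/8)](@powRD' d) //.
  have -> : (7/8 + 1/8 : R) = 1 by lra.
  by rewrite powRr1 //; exact: ltW.
have B1 : (N * d) `^ (7/8) <= 2.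
  have h78 : (0:R) <= 7/8 by lra.
  have := @ge0_ler_powR R (7/8) h78 (N*d) 2; rewrite !nnegrE => H.
  have H2 : 2 `^ (7/8) <= 2 :> R by apply: ler1_powR; lra.
  have Nd0 : 0 <= N * d by rewrite mulr_ge0 //; lra.
  have h2 : (0:R) <= 2 by lra.
  have := H Nd0 h2 Nd2; lra.
have B2 : d `^ (1/8) <= d `^ (1/30) by apply: powR_mono_exp; [rewrite dpos d1 | lra].
have B3 : 0 <= d `^ (1/8) := powR_ge0 _ _.
have B4 : 0 <= (N * d) `^ (7/8) := powR_ge0 _ _.
apply: le_trans (_ : N `^ (- (1/4)) * (N * d * (8 * N `^ (1/8))) <= _).
  by apply: ler_wpM2l => //; apply: ler_wpM2l => //; rewrite mulr_ge0 //; lra.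
have -> : N `^ (- (1/4)) * (N * d * (8 * N `^ (1/8))) =
   8 * ((N `^ (- (1/4)) * N `^ (1/8) * N) * d) by ring.
rewrite E1 E2.
have : (N * d) `^ (7/8) * d `^ (1/8) <= 2 * d `^ (1/30) by apply: ler_pM.
lra.
Qed.

Lemma N3 N d : 4 <= N -> 1 <= N * d -> d <= 1 ->
  N `^ (- (1/4)) * ln N <= 8 * d `^ (1/30).
Proof.
move=> N4 Nd d1.
have N0 : 0 < N by lra.
have dpos : 0 < d.
  rewrite ltNge; apply/negP => dn.
  have : N * d <= 0 by rewrite pmulr_rle0.
  lra.
have hL := @ln_le8 _ N N0.
have q0 : 0 <= N `^ (- (1/4)) := powR_ge0 _ _.
apply: le_trans (_ : N `^ (- (1/4)) * (8 * N `^ (1/8)) <= _).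
  exact: ler_wpM2l.
have E : N `^ (- (1/4)) * (8 * N `^ (1/8)) = 8 * N `^ (- (1/8)).
  rewrite mulrCA -[N `^ (- (1/4)) * N `^ (1/8)](@powRD' N) //.
  by congr (_ * (_ `^ _)); lra.
rewrite E ler_pM2l; last lra.
apply: le_trans (_ : d `^ (1/8) <= _).
  by apply: powR_neg_le => //; lra.
by apply: powR_mono_exp; [rewrite dpos d1 | lra].
Qed.

Lemma N4 N d X (del : R) : 4 <= N -> 1 <= N * d -> d <= 1 ->
  d * (ln N) ^+ 3 <= 1 -> 0 <= del ->
  0 <= X + 1 -> X <= del * d `^ (2/5) * Num.sqrt N ->
  N `^ (- (1/4)) * Num.sqrt ((X + 1) * ln N) <=
  Num.sqrt (del + 1) * d `^ (1/30).
Proof.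
move=> N4 Nd d1 dL del0 X0 HX.
have N0 : 0 < N by lra.
have dpos : 0 < d.
  rewrite ltNge; apply/negP => dn.
  have : N * d <= 0 by rewrite pmulr_rle0.
  lra.
have L0 : 0 <= ln N by apply: ln_ge0; lra.
have h0 : 0 <= N `^ (- (1/2)) := powR_ge0 _ _.
have Eq : N `^ (- (1/4)) = Num.sqrt (N `^ (- (1/2))).
  rewrite -powR12_sqrt // -powRrM; congr (_ `^ _); lra.
rewrite Eq -sqrtrM //.
have Es : N `^ (- (1/2)) * Num.sqrt N = 1.
  rewrite -powR12_sqrt; last exact: ltW.
  rewrite -(@powRD' N) //.
  have -> : (- (1/2) + 2^-1 : R) = 0 by lra.
  by rewrite powRr0.
have Hn : N `^ (- (1/2)) <= d `^ (2/5).
  apply: le_trans (_ : d `^ (1/2) <= _).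
    by apply: powR_neg_le => //; lra.
  by apply: powR_mono_exp; [rewrite dpos d1 | lra].
have Hd : d `^ (2/5) * ln N <= d `^ (1/15).
  have -> : (2/5 : R) = 1/15 + 1/3 by lra.
  rewrite (@powRD' d) // -mulrA.
  rewrite -[X in _ <= X]mulr1 ler_wpM2l ?powR_ge0 //.
  have h3 : 0 <= d `^ (1/3) * ln N by rewrite mulr_ge0 // powR_ge0.
  rewrite -(@expr_le1 _ 3) // exprMn -powR_mulrn ?powR_ge0 // -powRrM.
  have -> : (1/3 * 3%:R : R) = 1 by lra.
  by rewrite powRr1 //; exact: ltW.
have Hin : N `^ (- (1/2)) * ((X + 1) * ln N) <= (del + 1) * d `^ (1/15).
  apply: le_trans (_ : (del * d `^ (2/5) + d `^ (2/5)) * ln N <= _).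
    have -> : N `^ (- (1/2)) * ((X + 1) * ln N) =
       (N `^ (- (1/2)) * X + N `^ (- (1/2))) * ln N by ring.
    apply: ler_wpM2r => //; apply: lerD => //.
    apply: le_trans (_ : N `^ (- (1/2)) * (del * d `^ (2/5) * Num.sqrt N) <= _).
      exact: ler_wpM2l.
    have -> : N `^ (- (1/2)) * (del * d `^ (2/5) * Num.sqrt N) = del * d `^ (2/5) * (N `^ (- (1/2)) * Num.sqrt N) by ring.
    by rewrite Es mulr1.
  have -> : (del * d `^ (2/5) + d `^ (2/5)) * ln N = (del + 1) * (d `^ (2/5) * ln N) by ring.
  by apply: ler_wpM2l => //; lra.
apply: le_trans (_ : Num.sqrt ((del + 1) * d `^ (1/15)) <= _).
  by rewrite ler_sqrt // mulr_ge0 ?powR_ge0 //; lra.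
rewrite sqrtrM; last lra.
apply: ler_wpM2l; first exact: sqrtr_ge0.
rewrite -powR12_sqrt ?powR_ge0 // -powRrM.
have -> : (1/15 * 2^-1 : R) = 1/30 by lra.
by [].
Qed.

End Num2.


Lemma interp_nat (R : realType) (f : nat -> R) (a : nat) : interp f a%:R = f a.
Proof. by rewrite /interp natrK subrr mul0r addr0. Qed.

Lemma sqrt_le_lin (R : realType) (Z rho L : R) : 0 <= rho -> 1 <= L ->
  Z <= rho * L ->
  Num.sqrt ((Z + 1) * L) <= (rho + 1) * L.
Proof.
move=> r0 L1 hZ.
have [hZ0|hZ0] := leP 0 (Z + 1); last first.
  rewrite ler0_sqrtr; first by rewrite mulr_ge0 //; lra.
  nra.
have -> : (rho + 1) * L = Num.sqrt (((rho + 1) * L) ^+ 2).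
  by rewrite sqrtr_sqr ger0_norm // mulr_ge0 //; lra.
rewrite ler_sqrt ?sqr_ge0 //.
have : (Z + 1) * L <= (rho * L + 1) * L by apply: ler_wpM2r; lra.
have : (rho * L + 1) * L <= ((rho + 1) * L) ^+ 2.
  rewrite expr2; nra.
lra.
Qed.

Lemma F1 (R : realType) (mu : nat -> R) K n (del gam rho : R) T k j :
  0 < gam -> 0 < rho -> (4 <= n)%N ->
  Omega mu K n (2/5) del gam rho T -> (1 <= j <= k)%N -> (k <= K)%N ->
  forall m, `|gf mu T k j (minn m.+1 n) - gf mu T k j (minn m n)| <=
            2 * gam * (rho + 1) * ln (n%:R).
Proof.
move=> g0 r0 n4 [[HT Hs] [_ [H2 [_ H5]]]] jk kK m.
set L := ln (n%:R : R).
have L1 : 1 <= L by apply: ln_ge1; rewrite (ler_nat R 4 n).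
have [mn|mn] := ltnP m n; last first.
  rewrite !(minn_idPr _) //; last exact: leqW.
  by rewrite subrr normr0 !mulr_ge0 //; lra.
rewrite (minn_idPl mn).
have H5' := fun w l => H5 k j w l jk kK.
have [c [hc hb]] := @gtwo R mu T n k j gam L (ltW g0) (le_trans ler01 L1) m m.+1
   HT Hs H5' (leqnSn m) mn.
rewrite distrC; apply: le_trans hb _.
have hH := H2 m mn; rewrite -/L in hH.
have [hb1 hb2] : Hf R T m.+1 - Hf R T m <= rho * L /\ Hf R T m - Hf R T m.+1 <= rho * L.
  move: hH; rewrite /Hf => hH; split.
    by have := ler_norm ((size (vertex T m.+1))%:R - (size (vertex T m))%:R : R); lra.
  have := ler_norm (- ((size (vertex T m.+1))%:R - (size (vertex T m))%:R) : R).
  rewrite normrN; lra.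
have p1 : 0 <= Hf R T m by rewrite /Hf ler0n.
have p2 : 0 <= Hf R T m.+1 by rewrite /Hf ler0n.
have gg : 0 <= gam by lra.
have -> : 2 * gam * (rho + 1) * L = gam * ((rho + 1) * L) + gam * ((rho + 1) * L) by ring.
have [ec|ec] : c = m \/ c = m.+1 by lia.
all: subst c.
all: apply: lerD; apply: ler_wpM2l => //; apply: sqrt_le_lin => //; lra.
Qed.


Lemma Hold (R : realType) (mu : nat -> R) K n (del gam rho : R) T s t a c :
  0 <= del -> (0 < n)%N -> Omega mu K n (2/5) del gam rho T -> 0 <= s -> t <= 1 ->
  n%:R * s <= a%:R -> a%:R <= n%:R * t ->
  n%:R * s <= c%:R -> c%:R <= n%:R * t ->
  Hf R T a - Hf R T c <= del * (t - s) `^ (2/5) * Num.sqrt n%:R.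
Proof.
move=> del0 n0 [_ [H1 _]] s0 t1 ha1 ha2 hc1 hc2.
set N := n%:R : R.
have N0 : 0 < N by rewrite ltr0n.
have sN0 : 0 < Num.sqrt N by rewrite sqrtr_gt0.
have ea : a%:R / N * N = a%:R by rewrite divfK // gt_eqF.
have ec : c%:R / N * N = c%:R by rewrite divfK // gt_eqF.
have Ha1 : s <= a%:R / N by rewrite ler_pdivlMr // mulrC.
have Ha2 : a%:R / N <= t by rewrite ler_pdivrMr // mulrC.
have Hc1 : s <= c%:R / N by rewrite ler_pdivlMr // mulrC.
have Hc2 : c%:R / N <= t by rewrite ler_pdivrMr // mulrC.
have := H1 (a%:R / N) (c%:R / N).
have ia : 0 <= a%:R / N <= 1 by apply/andP; split; lra.
have ic : 0 <= c%:R / N <= 1 by apply/andP; split; lra.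
move=> /(_ ia ic).
rewrite /hn -/N [N * (a%:R / N)]mulrC ea [N * (c%:R / N)]mulrC ec !interp_nat.
move=> Hh.
have Hd : `|c%:R / N - a%:R / N| `^ (2/5) <= (t - s) `^ (2/5).
  have h25 : (0:R) <= 2/5 by lra.
  have := @ge0_ler_powR R (2/5) h25 (`|c%:R / N - a%:R / N|) (t - s).
  rewrite !nnegrE; apply; [exact: normr_ge0 | lra |].
  rewrite ler_norml; apply/andP; split; lra.
have : (Hf R T a - Hf R T c) / Num.sqrt N <= del * (t - s) `^ (2/5).
  apply: le_trans (ler_norm _) _; rewrite mulrBl.
  by apply: le_trans Hh _; apply: ler_wpM2l.
by rewrite ler_pdivrMr.
Qed.

Lemma Gn_unfold (R : realType) (mu : nat -> R) T n k j s :
  Gn mu T n k j s = n%:R `^ (- (1/4)) * interp (gf mu T k j) (n%:R * s).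
Proof. by []. Qed.

Lemma sqrt_term (R : realType) (N d X del : R) : 4 <= N -> 1 <= N * d -> d <= 1 ->
  d * (ln N) ^+ 3 <= 1 -> 0 <= del -> X <= del * d `^ (2/5) * Num.sqrt N ->
  N `^ (- (1/4)) * Num.sqrt ((X + 1) * ln N) <=
  Num.sqrt (del + 1) * d `^ (1/30).
Proof.
move=> hN4 Nd d1 dL del0 HX.
have [hX|hX] := leP 0 (X + 1); first exact: N4.
have L0 : 0 <= ln N by apply: ln_ge0; lra.
rewrite ler0_sqrtr ?mulr0; first by rewrite mulr_ge0 ?sqrtr_ge0 ?powR_ge0.
nra.
Qed.



Lemma Gpoint (R : realType) (mu : nat -> R) K n (del gam rho : R) T k j s t :
  (4 <= n)%N -> 0 < del -> 0 < gam -> 0 < rho ->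
  Omega mu K n (2/5) del gam rho T -> (1 <= j <= k)%N -> (k <= K)%N ->
  0 <= s -> s <= t -> t <= 1 -> (t - s) * (ln (n%:R : R)) ^+ 3 <= 1 ->
  `|Gn mu T n k j s - Gn mu T n k j t| <=
  (32 * gam * (rho + 1) + 2 * gam * Num.sqrt (del + 1)) * (t - s) `^ (1/30).
Proof.
move=> n4 d0 g0 r0 HO jk kK s0 st t1 hdL.
have HO' := HO; case: HO' => [[HT Hs] [_ [_ [_ H5]]]].
set N := n%:R : R; set L := ln N; set d := t - s.
have hN4 : 4 <= N by rewrite /N (ler_nat R 4 n).
have N0 : 0 < N by lra.
have L1 : 1 <= L by apply: ln_ge1.
have q0 : 0 <= N `^ (- (1/4)) := powR_ge0 _ _.
have th0 : 0 <= d `^ (1/30) := powR_ge0 _ _.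
have sd0 : 0 <= Num.sqrt (del + 1) := sqrtr_ge0 _.
rewrite !Gn_unfold -/N -mulrBr normrM (ger0_norm q0) distrC.
set x := N * s; set y := N * t.
have x0 : 0 <= x by rewrite mulr_ge0 // ltW.
have xy : x <= y by rewrite ler_wpM2l // ltW.
have yN : y <= N by rewrite /y -[X in _ <= X]mulr1 ler_wpM2l // ltW.
have xN : 0 <= x <= N by apply/andP; split; lra.
have yN' : 0 <= y <= N by apply/andP; split; lra.
rewrite (interp_clamp _ _ _ _ xN) (interp_clamp _ _ _ _ yN').
set f := fun l => gf mu T k j (minn l n).
have HF1 : forall m, `|f m.+1 - f m| <= 2 * gam * (rho + 1) * L.
  exact: (@F1 R mu K n del gam rho T k j g0 r0 n4 HO jk kK).
have yx : y - x = N * d by rewrite /x /y /d; ring.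
have [hx1 hx2] := andP (truncn_itv x0).
have [hy1 hy2] := andP (truncn_itv (le_trans x0 xy)).
have d1 : d <= 1 by rewrite /d; lra.
have dd0 : 0 <= d by rewrite /d; lra.
have g0' : 0 <= gam by lra.
have rr : 0 <= rho + 1 by lra.
have [hA|hB] := leqP (Num.truncn y) (Num.truncn x).+1.
  apply: le_trans (ler_wpM2l q0 (@interp_lipA R f _ x y HF1 x0 xy hA)) _.
  have Nd2 : N * d <= 2.
    have : (Num.truncn y)%:R <= (Num.truncn x).+1%:R :> R by rewrite ler_nat.
    rewrite -!natr1 in hy2 hx2 *; lra.
  have := @N2 R N d hN4 (introT andP (conj dd0 d1)) Nd2.
  rewrite -/L yx => h.
  have -> : N `^ (- (1 / 4)) * (N * d * (2 * gam * (rho + 1) * L)) =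
     (2 * gam * (rho + 1)) * (N `^ (- (1 / 4)) * (N * d * L)) by ring.
  apply: le_trans (_ : 2 * gam * (rho + 1) * (16 * d `^ (1/30)) <= _).
    by apply: ler_wpM2l => //; rewrite !mulr_ge0.
  have e1 : 2 * gam * (rho + 1) * (16 * d `^ (1/30)) = 32 * (gam * (rho + 1) * d `^ (1/30)) by ring.
  have e2 : (32 * gam * (rho + 1) + 2 * gam * Num.sqrt (del + 1)) * d `^ (1/30) = 32 * (gam * (rho + 1) * d `^ (1/30)) + 2 * gam * Num.sqrt (del + 1) * d `^ (1/30) by ring.
  rewrite e1 e2.
  have : 0 <= 2 * gam * Num.sqrt (del + 1) * d `^ (1/30) by rewrite !mulr_ge0.
  lra.
apply: le_trans (ler_wpM2l q0 (@interp_lipB R f _ x y HF1 x0 xy hB)) _.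
set m := Num.truncn x in hx1 hx2 hB *; set m' := Num.truncn y in hy1 hy2 hB *.
have m'n : (m' <= n)%N by rewrite -(ler_nat R); lra.
have Nd1 : 1 <= N * d.
  have : m.+2%:R <= m'%:R :> R by rewrite ler_nat.
  rewrite -!natr1 in hx2 *; lra.
have H5' := fun w l => H5 k j w l jk kK.
have [c [hc hb]] := @gtwo R mu T n k j gam L g0' (le_trans ler01 L1) m.+1 m'
   HT Hs H5' (ltnW hB) m'n.
rewrite /f (minn_idPl (leq_trans (ltnW hB) m'n)) (minn_idPl m'n).
have hm1a : x <= m.+1%:R by exact: ltW.
have [hc1 hc2] := andP hc.
have hm1b : m.+1%:R <= y.
  by apply: le_trans hy1; rewrite ler_nat; exact: ltnW.
have hca : x <= c%:R by apply: le_trans hm1a _; rewrite ler_nat.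
have hcb : c%:R <= y by apply: le_trans _ hy1; rewrite ler_nat.
have n0 : (0 < n)%N by apply: leq_trans n4.
have hm'a : x <= m'%:R by apply: le_trans hca _; rewrite ler_nat.
have X1 := @Hold R mu K n del gam rho T s t _ _ (ltW d0) n0 HO s0 t1 hm1a hm1b hca hcb.
have X2 := @Hold R mu K n del gam rho T s t _ _ (ltW d0) n0 HO s0 t1 hm'a hy1 hca hcb.
rewrite -/N -/d in X1 X2.
have hdL' : d * L ^+ 3 <= 1 by rewrite /d /L mulrC; lra.
have S1 := @sqrt_term R N d _ del hN4 Nd1 d1 hdL' (ltW d0) X1.
have S2 := @sqrt_term R N d _ del hN4 Nd1 d1 hdL' (ltW d0) X2.
have S3 := @N3 R N d hN4 Nd1 d1.
rewrite -/L in S1 S2 S3.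
have -> : N `^ (- (1 / 4)) * (2 * (2 * gam * (rho + 1) * L) +
   `|gf mu T k j m.+1 - gf mu T k j m'|) =
   4 * gam * (rho + 1) * (N `^ (- (1 / 4)) * L) +
   N `^ (- (1 / 4)) * `|gf mu T k j m.+1 - gf mu T k j m'| by ring.
have hb' := ler_wpM2l q0 hb.
rewrite mulrDr !mulrA in hb'.
have hP : N `^ (- (1 / 4)) * gam * Num.sqrt ((Hf R T m.+1 - Hf R T c + 1) * L) <=
   gam * (Num.sqrt (del + 1) * d `^ (1/30)).
  rewrite [N `^ _ * gam]mulrC -mulrA; exact: ler_wpM2l.
have hQ : N `^ (- (1 / 4)) * gam * Num.sqrt ((Hf R T m' - Hf R T c + 1) * L) <=
   gam * (Num.sqrt (del + 1) * d `^ (1/30)).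
  rewrite [N `^ _ * gam]mulrC -mulrA; exact: ler_wpM2l.
have hA : 4 * gam * (rho + 1) * (N `^ (- (1 / 4)) * L) <=
   32 * (gam * (rho + 1) * d `^ (1/30)).
  have -> : 32 * (gam * (rho + 1) * d `^ (1/30)) = 4 * gam * (rho + 1) * (8 * d `^ (1/30)) by ring.
  by apply: ler_wpM2l => //; rewrite !mulr_ge0.
have e2 : (32 * gam * (rho + 1) + 2 * gam * Num.sqrt (del + 1)) * d `^ (1/30) = 32 * (gam * (rho + 1) * d `^ (1/30)) + 2 * (gam * (Num.sqrt (del + 1) * d `^ (1/30))) by ring.
rewrite e2; apply: lerD => //.
apply: le_trans hb' _.
have e3 : forall z : R, 2 * z = z + z by move=> z; ring.
rewrite e3; exact: lerD hP hQ.
Qed.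


Lemma fsum_le (R : realType) (I : choiceType) (A : set I) (w F : I -> R) (B : R) :
  (forall i, A i -> 0 <= w i) -> (forall i, A i -> F i <= B) ->
  0 < \sum_(i \in A) w i ->
  \sum_(i \in A) (w i * F i) <= B * \sum_(i \in A) w i.
Proof.
move=> w0 FB.
case: (@finite_supportP R I A w 0) => [_ | X XA wX _]; first by rewrite big_nil ltxx.
move=> _.
rewrite (fsbigE (finmap.enum_fset X)); [|exact: finmap.fset_uniq|exact: XA|].
2: by move=> i Ai iX; rewrite wX // mul0r.
have -> : \sum_(i <- finmap.enum_fset X | i \in A) (w i * F i) = \sum_(i <- finmap.enum_fset X) (w i * F i).
  rewrite big_seq_cond [RHS]big_seq; apply: eq_bigl => i.
  by apply/andP/idP => [[]//|iX]; split => //; apply/mem_set; apply: XA.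
rewrite mulr_sumr big_seq [X in _ <= X]big_seq; apply: ler_sum => i iX.
have Ai : A i by apply: XA.
by rewrite mulrC ler_wpM2r // ?w0 // FB.
Qed.

Lemma En_le (R : realType) (mu : nat -> R) n (f : seq word -> R) (B : R) :
  (forall k, 0 <= mu k) -> 0 < Zn mu n -> (forall T, f T <= B) ->
  En mu n f <= B.
Proof.
move=> mu0 Z0 fB; rewrite /En ler_pdivrMr //.
move: Z0; rewrite /Zn => Z0.
apply: (@fsum_le R _ (Trees_n n) (gw_weight mu) f B) => //.
by move=> i _; rewrite /gw_weight; apply: prodr_ge0.
Qed.

Lemma sum_bound (R : realType) K (F : nat -> nat -> R) (X : R) : 0 <= X ->
  (forall k j, (1 <= j <= k)%N -> (k <= K)%N -> F k j <= X) ->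
  \sum_(1 <= k < K.+1) \sum_(1 <= j < k.+1) F k j <= (K%:R * K%:R) * X.
Proof.
move=> X0 HF.
apply: le_trans (_ : \sum_(1 <= k < K.+1) (K%:R * X) <= _).
  rewrite big_nat [X in _ <= X]big_nat; apply: ler_sum => k /andP[k1 kK].
  apply: le_trans (_ : \sum_(1 <= j < k.+1) X <= _).
    rewrite big_nat [X in _ <= X]big_nat; apply: ler_sum => j /andP[j1 jk].
    by apply: HF; lia.
  rewrite sumr_const_nat subSS subn0 -[X *+ k]mulr_natl.
  by apply: ler_wpM2r => //; rewrite ler_nat; lia.
by rewrite sumr_const_nat subSS subn0 -[_ *+ K]mulr_natl mulrA.
Qed.


Theorem lemma19 (R : realType) (mu : nat -> R) (K : nat)
  (* (H1) *)
  (HK : (0 < K)%N)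
  (mu_ge0 : forall k, 0 <= mu k)
  (mu_supp : forall k, (K < k)%N -> mu k = 0)
  (mu_sum : \sum_(k < K.+1) mu k = 1)
  (mu_crit : \sum_(k < K.+1) k%:R * mu k = 1)
  (mu_nondeg : mu 0%N + mu 1%N != 1)
  (* (H2) : the vectors (Y_{k,1},...,Y_{k,k}) ~ nu_k, realized on a probability space *)
  (d : measure_display) (Om : measurableType d) (P : probability Om R)
  (Y : nat -> nat -> Om -> R)
  (HYint : forall k j, (1 <= j <= k)%N -> (k <= K)%N ->
     P.-integrable setT (EFin \o Y k j))
  (Hmean : \sum_(1 <= k < K.+1) \sum_(1 <= j < k.+1)
             mu k * Rintegral P setT (Y k j) = 0)
  (Hvar : (0 < \sum_(1 <= k < K.+1) \sum_(1 <= j < k.+1)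
             (mu k)%:E * \int[P]_x ((Y k j x) ^+ 2)%:E)%E /\
          (\sum_(1 <= k < K.+1) \sum_(1 <= j < k.+1)
             (mu k)%:E * \int[P]_x ((Y k j x) ^+ 2)%:E < +oo)%E)
  (Hmom : exists p : R, 4 < p /\
     forall k j, (1 <= j <= k)%N -> (k <= K)%N ->
       (\int[P]_x ((`|Y k j x - Rintegral P setT (Y k j)| `^ p)%:E) < +oo)%E)
  (* epsilon, delta, gamma, rho *)
  (eps : R) (heps : 0 < eps)
  (delta gamma rho : R) (hdelta : 0 < delta) (hgamma : 0 < gamma) (hrho : 0 < rho)
  (HOmega : exists N : nat, forall n : nat, (N <= n)%N -> 0 < Zn mu n ->
     1 - eps <= Pn mu n (Omega mu K n (2 / 5) delta gamma rho))
  (alpha' a : R) (halpha' : 0 < alpha') (ha : 0 < a) :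
  exists beta c : R, 0 < beta /\ 0 < c /\
    exists N : nat, forall n : nat, (N <= n)%N -> 0 < Zn mu n ->
      forall s t : R, 0 <= s <= 1 -> 0 <= t <= 1 ->
        `|s - t| <= (ln (n%:R : R)) ^- 3 ->
        En mu n (fun T => G_dist1 mu K T n s t `^ beta *
                          \1_(Omega mu K n (2 / 5) delta gamma rho) T)
          <= c * `|t - s| `^ (1 + a).
Proof.
set C0 := 32 * gamma * (rho + 1) + 2 * gamma * Num.sqrt (delta + 1).
have C00 : 0 < C0.
  rewrite /C0; apply: ltr_wpDr; first by rewrite !mulr_ge0 ?sqrtr_ge0 //; lra.
  by rewrite !mulr_gt0 //; lra.
have K0 : 0 < K%:R :> R by rewrite ltr0n.
exists (30 * (1 + a)), ((K%:R * K%:R * C0) `^ (30 * (1 + a))).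
split; first by rewrite mulr_gt0 //; lra.
split; first by apply: powR_gt0; rewrite !mulr_gt0.
exists 4%N => n n4 Z0 s t hs ht hst.
apply: En_le => // T.
have L1 : 1 <= ln (n%:R : R) by apply: ln_ge1; rewrite (ler_nat R 4 n).
have hst' : `|t - s| * (ln (n%:R : R)) ^+ 3 <= 1.
  have L3 : 0 < (ln (n%:R : R)) ^+ 3 by apply: exprn_gt0; lra.
  have := ler_wpM2r (ltW L3) hst.
  by rewrite mulVf ?gt_eqF // distrC.
have beta0 : 0 <= 30 * (1 + a) by rewrite mulr_ge0 //; lra.
have cd0 : 0 <= (K%:R * K%:R * C0) `^ (30 * (1 + a)) * `|t - s| `^ (1 + a).
  by rewrite mulr_ge0 // powR_ge0.
rewrite indicE; case: (boolP (T \in Omega mu K n (2 / 5) delta gamma rho)) => hT;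
  last by rewrite mulr0.
rewrite mulr1; move: hT; rewrite in_setE => hT.
have HG : G_dist1 mu K T n s t <= (K%:R * K%:R) * (C0 * `|t - s| `^ (1/30)).
  apply: sum_bound; first by rewrite mulr_ge0 ?powR_ge0 //; lra.
  move=> k j jk kK.
  have [/andP[s0 s1] /andP[t0 t1]] := (hs, ht).
  have [st|ts] := leP s t.
    have e : `|t - s| = t - s by rewrite ger0_norm // subr_ge0.
    rewrite e in hst' *.
    exact: (@Gpoint R mu K n delta gamma rho T k j s t n4 hdelta hgamma hrho hT jk kK s0 st t1 hst').
  have e : `|t - s| = s - t by rewrite distrC ger0_norm // subr_ge0 ltW.
  rewrite e in hst' *; rewrite distrC.
  exact: (@Gpoint R mu K n delta gamma rho T k j t s n4 hdelta hgamma hrho hT jk kK t0 (ltW ts) s1 hst').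
have G0 : 0 <= G_dist1 mu K T n s t.
  by rewrite /G_dist1; apply: sumr_ge0 => k _; apply: sumr_ge0 => j _.
have P0 : 0 <= K%:R * K%:R * C0 by rewrite !mulr_ge0 //; lra.
have Q0 : 0 <= K%:R * K%:R * (C0 * `|t - s| `^ (1/30)).
  by rewrite mulrA mulr_ge0 // powR_ge0.
have H := @ge0_ler_powR R (30 * (1 + a)) beta0 (G_dist1 mu K T n s t)
  (K%:R * K%:R * (C0 * `|t - s| `^ (1/30))).
rewrite !nnegrE in H.
apply: le_trans (H G0 Q0 HG) _.
rewrite mulrA powRM ?powR_ge0 // -powRrM.
have -> : 1 / 30 * (30 * (1 + a)) = 1 + a by lra.
by [].
Qed.
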